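(* Let $\alpha<1$ be a real number and $k\ge 2$ an integer. Let $A\subset\mathbb{N}$ be such that $A(X)\le C\frac{\sqrt{X}}{(\log X)^{\alpha}}$ for some constant $C>0$ and all sufficiently large $X$. Then there is a constant $C'>0$ such that for all sufficiently large $X$, $$A^k(X)\le C'\sqrt{X}(\log X)^{k-1-k\alpha}.$$
   Context: $\mathbb{N}$ is the set of positive integers; $A^1=A$, $A^k=AA^{k-1}$ where $AB=\{ab:a\in A,b\in B\}$; for $S\subset\mathbb{N}_0$, $S(X)=|S\cap[1,X]|$. *)

(* Defs.v *)
From Stdlib Require Export Reals Lra Lia List ClassicalEpsilon.
Export ListNotations.
Open Scope R_scope.

Definition prodset (A B : nat -> Prop) : nat -> Prop :=
  fun n => exists a b, A a /\ B b /\ n = (a * b)%nat.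

(* A^1 = A, A^k = A A^(k-1); (A^0 is set to A by convention, never used). *)
Fixpoint setpow (A : nat -> Prop) (k : nat) : nat -> Prop :=
  match k with
  | O => A
  | S O => A
  | S k' => prodset A (setpow A k')
  end.

Definition ind (S : nat -> Prop) (n : nat) : nat :=
  if excluded_middle_informative (S n) then 1%nat else 0%nat.

(* Counting function S(X) = |S ∩ [1, X]| for real X (floor X = Int_part X). *)
Definition cnt (S : nat -> Prop) (X : R) : R :=
  INR (fold_right plus 0%nat (map (ind S) (seq 1 (Z.to_nat (Int_part X))))).

(* Main.v *)
Require Import Defs.
From Stdlib Require Import Reals.
Open Scope R_scope.
From Stdlib Require Import Lra Lia List Arith ZArith.
Require Import Defs.
Open Scope R_scope.


Definition nsum (f : nat -> nat) (lo n : nat) : nat := fold_right plus 0%nat (map f (seq lo n)).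

Lemma nsum_0 f lo : nsum f lo 0 = 0%nat. Proof. reflexivity. Qed.
Lemma nsum_S f lo n : nsum f lo (S n) = (f lo + nsum f (S lo) n)%nat. Proof. reflexivity. Qed.

Lemma nsum_split f n m : forall lo, nsum f lo (n + m) = (nsum f lo n + nsum f (lo + n) m)%nat.
Proof.
  induction n as [|n IH]; intro lo.
  - simpl. rewrite Nat.add_0_r. reflexivity.
  - rewrite Nat.add_succ_l, !nsum_S, IH. replace (S lo + n)%nat with (lo + S n)%nat by lia. lia.
Qed.

Lemma nsum_last f lo n : nsum f lo (S n) = (nsum f lo n + f (lo + n))%nat.
Proof. replace (S n) with (n + 1)%nat by lia. rewrite nsum_split, nsum_S, nsum_0. lia. Qed.

Lemma nsum_le f g n : forall lo, (forall i, (lo <= i < lo + n)%nat -> (f i <= g i)%nat) ->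
  (nsum f lo n <= nsum g lo n)%nat.
Proof.
  induction n as [|n IH]; intros lo H; [rewrite !nsum_0; lia|].
  pose proof (H lo ltac:(lia)). pose proof (IH (S lo) ltac:(intros; apply H; lia)).
  rewrite !nsum_S. lia.
Qed.

Lemma nsum_ext f g n : forall lo, (forall i, (lo <= i < lo + n)%nat -> f i = g i) ->
  nsum f lo n = nsum g lo n.
Proof.
  intros lo H. apply Nat.le_antisymm; apply nsum_le; intros i Hi; rewrite H; auto.
Qed.

Lemma nsum_add f g n : forall lo, nsum (fun i => f i + g i)%nat lo n = (nsum f lo n + nsum g lo n)%nat.
Proof. induction n as [|n IH]; intro lo; [reflexivity|]. rewrite !nsum_S, IH. lia. Qed.

Lemma nsum_mul_l c f n : forall lo, nsum (fun i => c * f i)%nat lo n = (c * nsum f lo n)%nat.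
Proof. induction n as [|n IH]; intro lo; [rewrite !nsum_0; lia|]. rewrite !nsum_S, IH. lia. Qed.

Lemma nsum_mul_r c f n : forall lo, nsum (fun i => f i * c)%nat lo n = (nsum f lo n * c)%nat.
Proof. induction n as [|n IH]; intro lo; [rewrite !nsum_0; lia|]. rewrite !nsum_S, IH. lia. Qed.

Lemma nsum_exch (F : nat -> nat -> nat) n1 lo1 n2 lo2 :
  nsum (fun i => nsum (fun j => F i j) lo2 n2) lo1 n1 =
  nsum (fun j => nsum (fun i => F i j) lo1 n1) lo2 n2.
Proof.
  revert lo1. induction n1 as [|n1 IH]; intro lo1.
  - simpl. induction n2 as [|n2 IH2] in lo2 |- *; [reflexivity|]. rewrite nsum_S, <- IH2. reflexivity.
  - rewrite nsum_S, IH. rewrite <- nsum_add. apply nsum_ext. intros. reflexivity.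
Qed.

Lemma nsum_ge_term f n lo i : (lo <= i < lo + n)%nat -> (f i <= nsum f lo n)%nat.
Proof.
  revert lo. induction n as [|n IH]; intros lo H; [lia|].
  rewrite nsum_S. destruct (Nat.eq_dec i lo) as [->|Hne]; [lia|].
  specialize (IH (S lo) ltac:(lia)). lia.
Qed.

Lemma nsum_eq0 f n lo : (forall i, (lo <= i < lo + n)%nat -> f i = 0%nat) -> nsum f lo n = 0%nat.
Proof.
  intros H. transitivity (nsum (fun _ => 0%nat) lo n).
  - apply nsum_ext; auto.
  - clear H. revert lo; induction n as [|n IH]; intros; [reflexivity|]. rewrite nsum_S, IH. reflexivity.
Qed.

Lemma nsum_const_le f n lo c : (forall i, (f i <= c)%nat) -> (nsum f lo n <= n * c)%nat.
Proof.
  revert lo; induction n as [|n IH]; intros lo H; [rewrite !nsum_0; lia|].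
  rewrite nsum_S. specialize (IH (S lo) H). specialize (H lo). simpl. lia.
Qed.

Lemma nsum_indic c len : forall lo,
  (nsum (fun n => if Nat.eqb c n then 1 else 0) lo len <=
    if (Nat.leb lo c && Nat.ltb c (lo + len))%bool then 1 else 0)%nat.
Proof.
  induction len as [|len IH]; intro lo; [rewrite !nsum_0; lia|].
  rewrite nsum_S. specialize (IH (S lo)).
  destruct (Nat.eqb_spec c lo); destruct (Nat.leb_spec (S lo) c); destruct (Nat.ltb_spec c (S lo + len));
  destruct (Nat.leb_spec lo c); destruct (Nat.ltb_spec c (lo + S len)); simpl in *; lia.
Qed.

Lemma nsum_cut f lo n k : (k <= n)%nat -> nsum f lo n = (nsum f lo k + nsum f (lo + k) (n - k))%nat.
Proof. intros H. replace n with (k + (n - k))%nat at 1 by lia. apply nsum_split. Qed.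


Definition Ncnt (S : nat -> Prop) (m : nat) : nat := nsum (ind S) 1 m.

Lemma ind_le1 S n : (ind S n <= 1)%nat.
Proof. unfold ind. destruct (excluded_middle_informative (S n)); lia. Qed.

Lemma N_le_len S m : (Ncnt S m <= m)%nat.
Proof. unfold Ncnt. pose proof (nsum_const_le (ind S) m 1 1 (ind_le1 S)). lia. Qed.

Lemma N_mono S m m' : (m <= m')%nat -> (Ncnt S m <= Ncnt S m')%nat.
Proof. intros H. unfold Ncnt. replace m' with (m + (m' - m))%nat by lia. rewrite nsum_split. lia. Qed.

Lemma cnt_INR S m : cnt S (INR m) = INR (Ncnt S m).
Proof. unfold cnt, Ncnt, nsum. rewrite Int_part_INR, Nat2Z.id. reflexivity. Qed.

Definition lek (x m : nat) : nat := if Nat.leb x m then 1%nat else 0%nat.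

Lemma CL A S m : (Ncnt (prodset A S) m <=
  nsum (fun a => nsum (fun b => ind A a * ind S b * lek (a * b) m) 1 m) 1 m)%nat.
Proof.
  unfold Ncnt.
  transitivity (nsum (fun n => nsum (fun a => nsum (fun b =>
      ind A a * ind S b * (if Nat.eqb (a * b) n then 1 else 0)) 1 m) 1 m) 1 m)%nat.
  - apply nsum_le. intros n Hn. unfold ind at 1.
    destruct (excluded_middle_informative (prodset A S n)) as [[a [b [Ha [Hb Hn']]]]|]; [|lia].
    assert (1 <= a)%nat by (destruct a; [simpl in Hn'; lia|lia]).
    assert (1 <= b)%nat by (destruct b; [rewrite Nat.mul_0_r in Hn'; lia|lia]).
    assert (a <= n)%nat by nia. assert (b <= n)%nat by nia.
    eapply Nat.le_trans; [|apply (nsum_ge_term _ m 1 a); lia].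
    eapply Nat.le_trans; [|apply (nsum_ge_term _ m 1 b); lia].
    unfold ind. destruct (excluded_middle_informative (A a)); [|tauto].
    destruct (excluded_middle_informative (S b)); [|tauto].
    rewrite <- Hn', Nat.eqb_refl. lia.
  - rewrite nsum_exch. apply nsum_le. intros a Ha.
    rewrite nsum_exch. apply nsum_le. intros b Hb.
    rewrite nsum_mul_l.
    pose proof (nsum_indic (a * b) m 1).
    unfold lek. destruct (Nat.leb_spec (a*b) m);
    destruct (Nat.leb_spec 1 (a*b)); destruct (Nat.ltb_spec (a*b) (1+m)); simpl in *; try nia.
Qed.

Section P3.
Local Open Scope nat_scope.

Definition Gf (S : nat -> Prop) (T a : nat) : nat := nsum (fun b => ind S b * lek (a*b) (2^T)) 1 (2^T).

Lemma pow2_pos n : (1 <= 2 ^ n)%nat.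
Proof. pose proof (Nat.pow_nonzero 2 n). lia. Qed.

Lemma Ga_bound S T j a : (j <= T)%nat -> (2^j <= a)%nat -> (Gf S T a <= Ncnt S (2^(T-j)))%nat.
Proof.
  intros HjT Ha. unfold Gf, Ncnt.
  assert (E : (2^T = 2^j * 2^(T-j))%nat) by (rewrite <- Nat.pow_add_r; f_equal; lia).
  assert (Hle : (2^(T-j) <= 2^T)%nat) by (rewrite E; pose proof (pow2_pos j); nia).
  rewrite (nsum_cut _ 1 (2^T) (2^(T-j)) Hle). rewrite (nsum_eq0 _ (2^T - 2^(T-j))).
  - rewrite Nat.add_0_r. apply nsum_le. intros i _. pose proof (ind_le1 S i).
    unfold lek. destruct (Nat.leb _ _); lia.
  - intros i Hi. unfold lek. destruct (Nat.leb_spec (a*i) (2^T)); [|lia].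
    exfalso. assert (2^j * (2^(T-j) + 1) <= a * i)%nat by (apply Nat.mul_le_mono; lia). nia.
Qed.

Lemma blocks (A S : nat -> Prop) T j : (j <= Datatypes.S T)%nat ->
  (nsum (fun a => ind A a * Gf S T a) 1 (2^j - 1) <=
   nsum (fun i => Ncnt A (2^(Datatypes.S i)) * Ncnt S (2^(T-i))) 0 j)%nat.
Proof.
  induction j as [|j IH]; intros Hj.
  - simpl. rewrite nsum_0. lia.
  - pose proof (pow2_pos j).
    replace (2 ^ Datatypes.S j - 1)%nat with ((2^j - 1) + 2^j)%nat by (simpl; lia).
    rewrite nsum_split, nsum_last. apply Nat.add_le_mono; [apply IH; lia|].
    replace (1 + (2^j - 1))%nat with (2^j)%nat by lia.
    transitivity (nsum (fun a => ind A a * Ncnt S (2^(T-j))) (2^j) (2^j))%nat.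
    + apply nsum_le. intros i Hi. apply Nat.mul_le_mono_l. apply Ga_bound; lia.
    + rewrite nsum_mul_r. apply Nat.mul_le_mono_r. unfold Ncnt.
      replace (2 ^ Datatypes.S (0 + j))%nat with ((2^j - 1) + 2^j + 1)%nat by (simpl; lia).
      rewrite !nsum_split. replace (1 + (2^j - 1))%nat with (2^j)%nat by lia. lia.
Qed.

Lemma conv_nat A S T :
  (Ncnt (prodset A S) (2^T) <= nsum (fun i => Ncnt A (2^(Datatypes.S i)) * Ncnt S (2^(T-i))) 0 (Datatypes.S T))%nat.
Proof.
  eapply Nat.le_trans; [apply CL|].
  eapply Nat.le_trans; [|apply (blocks A S T (Datatypes.S T)); lia].
  pose proof (pow2_pos T).
  replace (2 ^ Datatypes.S T - 1)%nat with (2^T + (2^T - 1))%nat by (simpl; lia).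
  rewrite nsum_split.
  assert (nsum (fun a => nsum (fun b => ind A a * ind S b * lek (a * b) (2 ^ T)) 1 (2 ^ T)) 1 (2 ^ T)
     = nsum (fun a => ind A a * Gf S T a) 1 (2^T))%nat; [|lia].
  apply nsum_ext. intros a _. unfold Gf. rewrite <- nsum_mul_l. apply nsum_ext. intros; lia.
Qed.

End P3.


Definition rsum (f : nat -> R) (lo n : nat) : R := fold_right Rplus 0 (map f (seq lo n)).

Lemma rsum_0 f lo : rsum f lo 0 = 0. Proof. reflexivity. Qed.
Lemma rsum_S f lo n : rsum f lo (S n) = f lo + rsum f (S lo) n. Proof. reflexivity. Qed.

Lemma rsum_last f n : forall lo, rsum f lo (S n) = rsum f lo n + f (lo + n)%nat.
Proof.
  induction n as [|n IH]; intro lo.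
  - rewrite rsum_S, !rsum_0, Nat.add_0_r. ring.
  - rewrite rsum_S, IH, rsum_S. replace (S lo + n)%nat with (lo + S n)%nat by lia. ring.
Qed.

Lemma rsum_le f g n : forall lo, (forall i, (lo <= i < lo + n)%nat -> f i <= g i) ->
  rsum f lo n <= rsum g lo n.
Proof.
  induction n as [|n IH]; intros lo H; [rewrite !rsum_0; lra|].
  rewrite !rsum_S. pose proof (H lo ltac:(lia)). pose proof (IH (S lo) ltac:(intros; apply H; lia)). lra.
Qed.

Lemma rsum_scal c f n : forall lo, rsum (fun i => c * f i) lo n = c * rsum f lo n.
Proof. induction n as [|n IH]; intro lo; [rewrite !rsum_0; ring|]. rewrite !rsum_S, IH. ring. Qed.

Lemma rsum_add f g n : forall lo, rsum (fun i => f i + g i) lo n = rsum f lo n + rsum g lo n.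
Proof. induction n as [|n IH]; intro lo; [rewrite !rsum_0; ring|]. rewrite !rsum_S, IH. ring. Qed.

Lemma rsum_const c n lo : rsum (fun _ => c) lo n = INR n * c.
Proof. revert lo; induction n as [|n IH]; intro lo; [rewrite rsum_0; simpl; ring|]. rewrite rsum_S, IH, S_INR. ring. Qed.

Lemma INR_nsum f n : forall lo, INR (nsum f lo n) = rsum (fun i => INR (f i)) lo n.
Proof. induction n as [|n IH]; intro lo; [reflexivity|]. rewrite nsum_S, rsum_S, plus_INR, IH. reflexivity. Qed.

Lemma rsum_shift f n lo : rsum f (S lo) n = rsum (fun i => f (S i)) lo n.
Proof. revert lo; induction n as [|n IH]; intro lo; [reflexivity|]. rewrite !rsum_S, IH. reflexivity. Qed.

Lemma rsum_rev h t : rsum (fun i => h (t - i)%nat) 0 (S t) = rsum h 0 (S t).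
Proof.
  revert h; induction t as [|t IH]; intro h; [reflexivity|].
  rewrite rsum_S, rsum_shift. simpl (S t - 0)%nat.
  transitivity (h (S t) + rsum (fun i => h (t - i)%nat) 0 (S t)).
  - f_equal.
  - rewrite IH, (rsum_last h (S t)). simpl (0 + S t)%nat. ring.
Qed.

Lemma exp_le x y : x <= y -> exp x <= exp y.
Proof. intros [H|H]; [left; apply exp_increasing; auto|subst; lra]. Qed.

Lemma ln_le x y : 0 < x -> x <= y -> ln x <= ln y.
Proof. intros Hx [H|H]; [left; apply ln_increasing; auto|subst; lra]. Qed.

Lemma Rpower_pos x y : 0 < Rpower x y.
Proof. unfold Rpower. apply exp_pos. Qed.

Lemma RC x y K c : 0 < x -> 0 < y -> x <= K * y -> y <= K * x ->
  Rpower x c <= Rpower K (Rabs c) * Rpower y c.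
Proof.
  intros Hx Hy H1 H2.
  assert (HK : 0 < K) by nra.
  unfold Rpower. rewrite <- exp_plus. apply exp_le.
  assert (L1 : ln x <= ln K + ln y) by (rewrite <- ln_mult by lra; apply ln_le; lra).
  assert (L2 : ln y <= ln K + ln x) by (rewrite <- ln_mult by lra; apply ln_le; lra).
  destruct (Rle_dec 0 c).
  - rewrite Rabs_right by lra. nra.
  - rewrite Rabs_left by lra. nra.
Qed.

Lemma ln_minus1 x : 1 < x -> ln (x - 1) <= ln x - 1 / x.
Proof.
  intros Hx.
  replace (x - 1) with (x * ((x - 1) / x)) by (field; lra).
  rewrite ln_mult by (try apply Rdiv_lt_0_compat; lra).
  pose proof (exp_ineq1_le (ln ((x - 1) / x))).
  rewrite exp_ln in H by (apply Rdiv_lt_0_compat; lra).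
  assert ((x - 1) / x = 1 - 1 / x) by (field; lra). lra.
Qed.

Lemma tele_step x g : 1 < x -> 0 < g < 1 ->
  Rpower x (g - 1) <= 2 / g * (Rpower x g - Rpower (x - 1) g).
Proof.
  intros Hx Hg.
  assert (E1 : Rpower x g = Rpower x (g - 1) * x).
  { replace g with ((g - 1) + 1) at 1 by ring. rewrite Rpower_plus, Rpower_1 by lra. ring. }
  assert (E2 : Rpower (x - 1) g <= Rpower x g * exp (- (g / x))).
  { unfold Rpower. rewrite <- exp_plus. apply exp_le. pose proof (ln_minus1 x Hx).
    assert (g * ln (x - 1) <= g * (ln x - 1 / x)) by (apply Rmult_le_compat_l; lra).
    unfold Rdiv in *. lra. }
  assert (E3 : exp (- (g / x)) <= 1 - g / (2 * x)).
  { rewrite exp_Ropp. pose proof (exp_ineq1_le (g / x)).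
    assert (0 < g / x <= 1). { split. apply Rdiv_lt_0_compat; lra.
      apply Rmult_le_reg_r with x; [lra|]. unfold Rdiv. rewrite Rmult_assoc, Rinv_l by lra. lra. }
    assert (Hv : 0 < 1 + g / x) by lra.
    apply Rle_trans with (/ (1 + g / x)). apply Rinv_le_contravar; lra.
    apply Rmult_le_reg_r with (1 + g / x); [lra|]. rewrite Rinv_l by lra.
    replace (g / (2 * x)) with (g / x / 2) by (field; lra). nra. }
  pose proof (Rpower_pos x (g - 1)) as P.
  assert (Rpower (x - 1) g <= Rpower x g * (1 - g / (2 * x))).
  { eapply Rle_trans; [apply E2|]. apply Rmult_le_compat_l; [left; apply Rpower_pos|auto]. }
  rewrite E1 in *.
  assert (Rpower x (g - 1) * x * (g / (2 * x)) = Rpower x (g - 1) * (g / 2)) by (field; lra).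
  apply Rmult_le_reg_l with (g / 2); [lra|].
  replace (g / 2 * (2 / g * (Rpower x (g - 1) * x - Rpower (x - 1) g)))
    with (Rpower x (g - 1) * x - Rpower (x - 1) g) by (field; lra).
  nra.
Qed.


Lemma Rpower_1_base c : Rpower 1 c = 1.
Proof. unfold Rpower. rewrite ln_1, Rmult_0_r, exp_0. reflexivity. Qed.

Lemma INR_p1_pos i : 0 < INR i + 1.
Proof. pose proof (pos_INR i). lra. Qed.

Lemma Rpower_ge1 x g : 1 <= x -> 0 <= g -> 1 <= Rpower x g.
Proof. intros. rewrite <- (Rpower_O x) by lra. apply Rle_Rpower; lra. Qed.

Lemma PS c : -1 < c -> exists E, 0 < E /\ forall t,
  rsum (fun i => Rpower (INR i + 1) c) 0 (S t) <= E * Rpower (INR t + 1) (c + 1).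
Proof.
  intros Hc. destruct (Rle_dec 0 c) as [Hc0|Hc0].
  - exists 1. split; [lra|]. intros t.
    eapply Rle_trans.
    + apply (rsum_le _ (fun _ => Rpower (INR t + 1) c)). intros i Hi.
      apply Rle_Rpower_l; [lra|]. split; [apply INR_p1_pos|]. apply Rplus_le_compat_r, le_INR. lia.
    + rewrite rsum_const, Rpower_plus, Rpower_1 by apply INR_p1_pos. rewrite S_INR. lra.
  - set (g := c + 1). assert (Hg : 0 < g < 1) by (unfold g; lra).
    assert (Hind : forall t, rsum (fun i => Rpower (INR i + 1) c) 0 (S t) <=
                     1 + 2 / g * (Rpower (INR t + 1) g - 1)).
    { induction t as [|t IH].
      - rewrite rsum_S, rsum_0. simpl INR. rewrite Rplus_0_l, !Rpower_1_base. lra.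
      - rewrite rsum_last. simpl (0 + S t)%nat.
        pose proof (tele_step (INR (S t) + 1) g) as Ht.
        replace (INR (S t) + 1 - 1) with (INR t + 1) in Ht by (rewrite S_INR; ring).
        replace (g - 1) with c in Ht by (unfold g; ring).
        assert (1 < INR (S t) + 1) by (rewrite S_INR; pose proof (pos_INR t); lra).
        specialize (Ht H Hg). lra. }
    exists (1 + 2 / g). split. { assert (0 < 2 / g) by (apply Rdiv_lt_0_compat; lra). lra. }
    intros t. eapply Rle_trans; [apply Hind|].
    assert (1 <= Rpower (INR t + 1) g) by (apply Rpower_ge1; [pose proof (pos_INR t)|]; lra).
    assert (0 < 2 / g) by (apply Rdiv_lt_0_compat; lra). fold g. nra.
Qed.

Lemma DB a b : -1 < a -> -1 < b -> exists E, 0 < E /\ forall t,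
  rsum (fun i => Rpower (INR i + 1) a * Rpower (INR (t - i) + 1) b) 0 (S t)
    <= E * Rpower (INR t + 1) (a + b + 1).
Proof.
  intros Ha Hb. destruct (PS a Ha) as [Ea [Ea0 HEa]]. destruct (PS b Hb) as [Eb [Eb0 HEb]].
  set (K := Rpower 2 (Rabs a) + Rpower 2 (Rabs b)).
  assert (HK : 0 < K) by (unfold K; pose proof (Rpower_pos 2 (Rabs a)); pose proof (Rpower_pos 2 (Rabs b)); lra).
  exists (K * (Ea + Eb)). split; [nra|]. intro t.
  set (n := INR t + 1). assert (Hn : 0 < n) by apply INR_p1_pos.
  eapply Rle_trans.
  - apply (rsum_le _ (fun i => K * Rpower n b * Rpower (INR i + 1) a + K * Rpower n a * Rpower (INR (t - i) + 1) b)).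
    intros i Hi.
    set (x := INR i + 1). set (y := INR (t - i) + 1).
    assert (Hx : 0 < x) by apply INR_p1_pos. assert (Hy : 0 < y) by apply INR_p1_pos.
    assert (Hxy : x + y = n + 1) by (unfold x, y, n; rewrite minus_INR by lia; ring).
    assert (Hxn : x <= n) by (unfold x, n; apply Rplus_le_compat_r, le_INR; lia).
    assert (Hyn : y <= n) by (unfold y, n; apply Rplus_le_compat_r, le_INR; lia).
    pose proof (Rpower_pos x a). pose proof (Rpower_pos y b). pose proof (Rpower_pos n a).
    pose proof (Rpower_pos n b). pose proof (Rpower_pos 2 (Rabs a)). pose proof (Rpower_pos 2 (Rabs b)).
    destruct (Rle_dec x y).
    + assert (Rpower y b <= Rpower 2 (Rabs b) * Rpower n b) by (apply RC; lra).
      assert (Rpower x a * Rpower y b <= Rpower x a * (Rpower 2 (Rabs b) * Rpower n b)) by (apply Rmult_le_compat_l; lra).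
      assert (0 <= K * Rpower n a * Rpower y b) by (apply Rmult_le_pos; [apply Rmult_le_pos|]; lra).
      assert (Rpower 2 (Rabs b) * Rpower n b * Rpower x a <= K * Rpower n b * Rpower x a).
      { apply Rmult_le_compat_r; [lra|]. apply Rmult_le_compat_r; [lra|]. unfold K; lra. }
      lra.
    + assert (Rpower x a <= Rpower 2 (Rabs a) * Rpower n a) by (apply RC; lra).
      assert (Rpower x a * Rpower y b <= (Rpower 2 (Rabs a) * Rpower n a) * Rpower y b) by (apply Rmult_le_compat_r; lra).
      assert (0 <= K * Rpower n b * Rpower x a) by (apply Rmult_le_pos; [apply Rmult_le_pos|]; lra).
      assert (Rpower 2 (Rabs a) * Rpower n a * Rpower y b <= K * Rpower n a * Rpower y b).
      { apply Rmult_le_compat_r; [lra|]. apply Rmult_le_compat_r; [lra|]. unfold K; lra. }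
      lra.
  - rewrite rsum_add, !rsum_scal.
    rewrite (rsum_rev (fun j => Rpower (INR j + 1) b) t).
    specialize (HEa t). specialize (HEb t). fold n in HEa, HEb.
    assert (E1 : Rpower n b * Rpower n (a + 1) = Rpower n (a + b + 1)) by (rewrite <- Rpower_plus; f_equal; ring).
    assert (E2 : Rpower n a * Rpower n (b + 1) = Rpower n (a + b + 1)) by (rewrite <- Rpower_plus; f_equal; ring).
    pose proof (Rpower_pos n a). pose proof (Rpower_pos n b).
    assert (K * Rpower n b * rsum (fun i => Rpower (INR i + 1) a) 0 (S t) <= K * Rpower n b * (Ea * Rpower n (a + 1)))
      by (apply Rmult_le_compat_l; [nra|auto]).
    assert (K * Rpower n a * rsum (fun i => Rpower (INR i + 1) b) 0 (S t) <= K * Rpower n a * (Eb * Rpower n (b + 1)))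
      by (apply Rmult_le_compat_l; [nra|auto]).
    assert (F1 : K * Rpower n b * (Ea * Rpower n (a + 1)) = K * Ea * Rpower n (a + b + 1)) by (rewrite <- E1; ring).
    assert (F2 : K * Rpower n a * (Eb * Rpower n (b + 1)) = K * Eb * Rpower n (a + b + 1)) by (rewrite <- E2; ring).
    lra.
Qed.


Definition Pbound (S : nat -> Prop) (b : R) : Prop :=
  exists D, 0 < D /\ forall t, INR (Ncnt S (2^t)) <= D * sqrt 2 ^ t * Rpower (INR t + 1) b.

Lemma s_pos : 0 < sqrt 2.
Proof. apply sqrt_lt_R0. lra. Qed.

Lemma spow_pos t : 0 < sqrt 2 ^ t.
Proof. apply pow_lt, s_pos. Qed.

Lemma stepB A S al b : al < 1 -> -1 < b -> Pbound A (- al) -> Pbound S b -> Pbound (prodset A S) (b + 1 - al).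
Proof.
  intros Hal Hb [DA [HDA HA]] [DS [HDS HS]].
  destruct (DB (- al) b ltac:(lra) Hb) as [E [HE HDB]].
  set (C0 := DA * DS * sqrt 2 * Rpower 2 (Rabs (- al))).
  assert (HC0 : 0 < C0).
  { unfold C0. pose proof s_pos. pose proof (Rpower_pos 2 (Rabs (- al))).
    repeat apply Rmult_lt_0_compat; auto. }
  exists (C0 * E). split; [apply Rmult_lt_0_compat; auto|]. intro t.
  eapply Rle_trans; [apply le_INR, conv_nat|]. rewrite INR_nsum.
  eapply Rle_trans.
  - apply (rsum_le _ (fun i => C0 * (sqrt 2 ^ t * (Rpower (INR i + 1) (- al) * Rpower (INR (t - i) + 1) b)))).
    intros i Hi. rewrite mult_INR.
    assert (H1 : INR (Ncnt A (2 ^ Datatypes.S i)) <= DA * sqrt 2 ^ Datatypes.S i * (Rpower 2 (Rabs (- al)) * Rpower (INR i + 1) (- al))).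
    { eapply Rle_trans; [apply HA|]. apply Rmult_le_compat_l.
      - pose proof (spow_pos (Datatypes.S i)). nra.
      - apply RC; try apply INR_p1_pos; rewrite S_INR; pose proof (pos_INR i); lra. }
    specialize (HS (t - i)%nat).
    pose proof (pos_INR (Ncnt A (2 ^ Datatypes.S i))). pose proof (pos_INR (Ncnt S (2 ^ (t - i)))).
    eapply Rle_trans; [apply Rmult_le_compat; [auto|auto|apply H1|apply HS]|].
    right. unfold C0.
    assert (Epow : sqrt 2 ^ Datatypes.S i * sqrt 2 ^ (t - i) = sqrt 2 * sqrt 2 ^ t).
    { rewrite <- pow_add. replace (Datatypes.S i + (t - i))%nat with (Datatypes.S t) by lia. reflexivity. }
    transitivity (DA * DS * Rpower 2 (Rabs (- al)) * (sqrt 2 ^ Datatypes.S i * sqrt 2 ^ (t - i)) *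
       (Rpower (INR i + 1) (- al) * Rpower (INR (t - i) + 1) b)); [ring|].
    rewrite Epow. ring.
  - rewrite !rsum_scal.
    specialize (HDB t).
    replace (- al + b + 1) with (b + 1 - al) in HDB by ring.
    pose proof (spow_pos t).
    assert (sqrt 2 ^ t * rsum (fun i => Rpower (INR i + 1) (- al) * Rpower (INR (t - i) + 1) b) 0 (Datatypes.S t)
       <= sqrt 2 ^ t * (E * Rpower (INR t + 1) (b + 1 - al))) by (apply Rmult_le_compat_l; lra).
    apply Rle_trans with (C0 * (sqrt 2 ^ t * (E * Rpower (INR t + 1) (b + 1 - al)))).
    + apply Rmult_le_compat_l; lra.
    + right. ring.
Qed.


Lemma sqrt_pow x n : 0 <= x -> sqrt (x ^ n) = sqrt x ^ n.
Proof.
  intros Hx. induction n as [|n IH]; simpl; [apply sqrt_1|].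
  rewrite sqrt_mult; [rewrite IH; ring|auto|apply pow_le; auto].
Qed.

Lemma INR_pow2 t : INR (2 ^ t) = sqrt 2 ^ t * sqrt 2 ^ t.
Proof. rewrite pow_INR, <- Rpow_mult_distr, sqrt_sqrt by lra. reflexivity. Qed.

Lemma ln2_bounds : / 2 < ln 2 < 1.
Proof.
  split; [apply ln_lt_2|]. rewrite <- (ln_exp 1). apply ln_increasing; [lra|].
  pose proof (exp_ineq1 1 ltac:(lra)). lra.
Qed.

Lemma stepA A al : (exists C, 0 < C /\ exists X0, forall X, X0 <= X ->
      cnt A X <= C * sqrt X / Rpower (ln X) al) -> Pbound A (- al).
Proof.
  intros [C [HC [X0 HX]]].
  destruct (INR_unbounded X0) as [n0 Hn0].
  set (T0 := Datatypes.S n0).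
  pose proof ln2_bounds as Hl2.
  set (K := 2 / ln 2).
  assert (HK : K * ln 2 = 2) by (unfold K; field; lra).
  assert (HK2 : 2 <= K).
  { unfold K. apply Rmult_le_reg_r with (ln 2); [lra|]. unfold Rdiv. rewrite Rmult_assoc, Rinv_l by lra. lra. }
  set (L := Rpower (INR T0 + 1) (- Rabs al)).
  assert (HL : 0 < L) by apply Rpower_pos.
  set (D1 := C * Rpower K (Rabs (- al))).
  set (D2 := sqrt 2 ^ T0 / L).
  assert (HD1 : 0 < D1) by (unfold D1; pose proof (Rpower_pos K (Rabs (- al))); nra).
  assert (HD2 : 0 < D2) by (unfold D2; apply Rdiv_lt_0_compat; [apply spow_pos|auto]).
  exists (D1 + D2). split; [lra|]. intro t.
  pose proof (spow_pos t) as Hst. pose proof (Rpower_pos (INR t + 1) (- al)) as Hrp.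
  assert (Hmono : forall D, D <= D1 + D2 -> D * sqrt 2 ^ t * Rpower (INR t + 1) (- al) <=
                   (D1 + D2) * sqrt 2 ^ t * Rpower (INR t + 1) (- al)).
  { intros. apply Rmult_le_compat_r; [lra|]. apply Rmult_le_compat_r; lra. }
  destruct (le_lt_dec T0 t) as [Ht|Ht].
  -
    assert (Ht1 : 1 <= INR t) by (apply (le_INR 1); unfold T0 in Ht; lia).
    assert (HX2 : X0 <= INR (2 ^ t)).
    { assert (INR n0 <= INR (2 ^ t)) by (apply le_INR; pose proof (Nat.pow_gt_lin_r 2 t ltac:(lia)); unfold T0 in Ht; lia). lra. }
    specialize (HX _ HX2). rewrite cnt_INR in HX.
    rewrite pow_INR in HX. simpl (INR 2) in HX. rewrite sqrt_pow, ln_pow in HX by lra.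
    unfold Rdiv in HX. rewrite <- Rpower_Ropp in HX.
    assert (Hrc : Rpower (INR t * ln 2) (- al) <= Rpower K (Rabs (- al)) * Rpower (INR t + 1) (- al)).
    { apply RC; [nra|apply INR_p1_pos|nra|nra]. }
    eapply Rle_trans; [apply HX|].
    eapply Rle_trans; [|apply (Hmono D1); lra].
    unfold D1. pose proof (spow_pos t).
    apply Rle_trans with (C * sqrt 2 ^ t * (Rpower K (Rabs (- al)) * Rpower (INR t + 1) (- al))).
    + apply Rmult_le_compat_l; [nra|auto].
    + right; ring.
  -
    assert (HLb : L <= Rpower (INR t + 1) (- al)).
    { unfold L, Rpower. apply exp_le.
      assert (0 <= ln (INR t + 1)) by (rewrite <- ln_1; apply ln_le; [lra|pose proof (pos_INR t); lra]).
      assert (ln (INR t + 1) <= ln (INR T0 + 1)) by (apply ln_le; [apply INR_p1_pos|apply Rplus_le_compat_r, le_INR; lia]).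
      destruct (Rle_dec 0 al); [rewrite Rabs_right by lra|rewrite Rabs_left by lra]; nra. }
    assert (Hn : INR (Ncnt A (2 ^ t)) <= sqrt 2 ^ t * sqrt 2 ^ T0).
    { eapply Rle_trans; [apply le_INR, N_le_len|]. rewrite INR_pow2.
      apply Rmult_le_compat_l; [lra|]. apply Rle_pow; [|lia].
      rewrite <- sqrt_1. apply sqrt_le_1_alt. lra. }
    eapply Rle_trans; [apply Hn|].
    assert (sqrt 2 ^ T0 = D2 * L) by (unfold D2; field; lra).
    rewrite H.
    apply Rle_trans with (D2 * sqrt 2 ^ t * Rpower (INR t + 1) (- al)).
    + assert (0 < D2 * sqrt 2 ^ t) by (apply Rmult_lt_0_compat; auto).
      replace (sqrt 2 ^ t * (D2 * L)) with ((D2 * sqrt 2 ^ t) * L) by ring.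
      apply Rmult_le_compat_l; lra.
    + apply Rmult_le_compat_r; [lra|]. apply Rmult_le_compat_r; lra.
Qed.


Lemma all_j A al : al < 1 -> Pbound A (- al) -> forall j, (1 <= j)%nat ->
  Pbound (setpow A j) (INR j - 1 - INR j * al).
Proof.
  intros Hal PA j Hj. induction j as [|j IH]; [lia|].
  destruct j as [|j].
  - simpl setpow. replace (INR 1 - 1 - INR 1 * al) with (- al) by (simpl; ring). exact PA.
  - change (setpow A (Datatypes.S (Datatypes.S j))) with (prodset A (setpow A (Datatypes.S j))).
    specialize (IH ltac:(lia)).
    assert (Hb : -1 < INR (Datatypes.S j) - 1 - INR (Datatypes.S j) * al).
    { rewrite S_INR. pose proof (pos_INR j). nra. }
    pose proof (stepB A _ al _ Hal Hb PA IH) as H.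
    replace (INR (Datatypes.S (Datatypes.S j)) - 1 - INR (Datatypes.S (Datatypes.S j)) * al)
      with (INR (Datatypes.S j) - 1 - INR (Datatypes.S j) * al + 1 - al)
      by (rewrite (S_INR (Datatypes.S j)); ring).
    exact H.
Qed.

Lemma stepC S b : Pbound S b -> exists C', 0 < C' /\ exists X0, forall X, X0 <= X ->
  cnt S X <= C' * sqrt X * Rpower (ln X) b.
Proof.
  intros [D [HD HS]].
  pose proof ln2_bounds as Hl2.
  set (K := 3 / ln 2).
  assert (HK : K * ln 2 = 3) by (unfold K; field; lra).
  assert (HK3 : 3 <= K).
  { unfold K. apply Rmult_le_reg_r with (ln 2); [lra|]. unfold Rdiv. rewrite Rmult_assoc, Rinv_l by lra. lra. }
  pose proof s_pos as Hs.
  pose proof (Rpower_pos K (Rabs b)) as HKb.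
  exists (D * sqrt 2 * Rpower K (Rabs b)). split; [repeat apply Rmult_lt_0_compat; auto|].
  exists 2. intros X HX.
  destruct (base_Int_part X) as [B1 B2].
  set (z := Int_part X) in *.
  assert (Hz : (1 <= z)%Z) by (assert (Hc : IZR 0 < IZR z) by (simpl; lra); apply lt_IZR in Hc; lia).
  set (m := Z.to_nat z).
  assert (Hm : INR m = IZR z) by (unfold m; rewrite INR_IZR_INZ, Z2Nat.id by lia; reflexivity).
  assert (Hcnt : cnt S X = INR (Ncnt S m)) by reflexivity.
  assert (Hm2 : (2 <= m)%nat).
  { apply INR_le. simpl. assert (IZR z > 1) by lra. rewrite <- Hm in H.
    destruct m as [|[|m']]; simpl in H; try lra. rewrite !S_INR. pose proof (pos_INR m'). lra. }
  set (t := Nat.log2 m).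
  destruct (Nat.log2_spec m ltac:(lia)) as [T1 T2]. fold t in T1, T2.
  assert (Ht1 : (1 <= t)%nat) by (apply (Nat.log2_le_pow2 m 1); simpl; lia).
  assert (HtR : 1 <= INR t) by (apply (le_INR 1); auto).
  assert (HX1 : INR (2 ^ t) <= X) by (apply Rle_trans with (INR m); [apply le_INR; auto|lra]).
  assert (HX2 : X <= INR (2 ^ Datatypes.S t)) by (assert (INR (m + 1) <= INR (2 ^ Datatypes.S t)) by (apply le_INR; lia); rewrite plus_INR in H; change (INR 1) with 1 in H; lra).
  rewrite !pow_INR in HX1, HX2. replace (INR 2) with 2 in HX1, HX2 by (simpl; ring).
  assert (Hpt : 0 < 2 ^ t) by (apply pow_lt; lra).
  assert (Hl1 : INR t * ln 2 <= ln X) by (rewrite <- ln_pow by lra; apply ln_le; lra).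
  assert (Hl2' : ln X <= INR (Datatypes.S t) * ln 2) by (rewrite <- ln_pow by lra; apply ln_le; lra).
  rewrite S_INR in Hl2'.
  assert (Hsq : sqrt 2 ^ t <= sqrt X) by (rewrite <- sqrt_pow by lra; apply sqrt_le_1_alt; lra).
  assert (Hrc : Rpower (INR (Datatypes.S t) + 1) b <= Rpower K (Rabs b) * Rpower (ln X) b).
  { rewrite S_INR. apply RC; [pose proof (pos_INR t); lra|nra|nra|nra]. }
  rewrite Hcnt.
  eapply Rle_trans; [apply le_INR, (N_mono S m (2 ^ Datatypes.S t)); lia|].
  eapply Rle_trans; [apply HS|].
  simpl (sqrt 2 ^ Datatypes.S t).
  pose proof (spow_pos t). pose proof (Rpower_pos (INR (Datatypes.S t) + 1) b).
  pose proof (Rpower_pos (ln X) b).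
  apply Rle_trans with (D * (sqrt 2 * sqrt X) * (Rpower K (Rabs b) * Rpower (ln X) b)).
  - assert (0 <= D * (sqrt 2 * sqrt 2 ^ t)) by (apply Rmult_le_pos; [lra|]; apply Rmult_le_pos; lra).
    apply Rmult_le_compat; [auto|lra| |auto].
    apply Rmult_le_compat_l; [lra|]. apply Rmult_le_compat_l; lra.
  - right; ring.
Qed.


Theorem corollary2p3 (alpha : R) (k : nat) (A : nat -> Prop) :
  alpha < 1 ->
  (2 <= k)%nat ->
  (forall n, A n -> (1 <= n)%nat) ->
  (exists C, 0 < C /\ exists X0, forall X, X0 <= X ->
      cnt A X <= C * sqrt X / Rpower (ln X) alpha) ->
  exists C', 0 < C' /\ exists X0, forall X, X0 <= X ->
      cnt (setpow A k) X <= C' * sqrt X * Rpower (ln X) (INR k - 1 - INR k * alpha).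
Proof.
  intros Hal Hk _ Hyp. apply stepC. apply all_j; [exact Hal| apply stepA; exact Hyp | lia].
Qed.
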